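(* Let $X$ be a nontrivial real Banach space. Then $X$ has the diameter $2$ property if and only if $X^*$ is weakly octahedral.
   Context: $X$ has the diameter $2$ property if every nonempty relatively weakly open subset of the closed unit ball $B_X$ has diameter $2$. A Banach space $Z$ is weakly octahedral if for every finite-dimensional subspace $E$ of $Z$, every $z^*\in B_{Z^*}$, and every $\varepsilon>0$, there is a $y\in S_Z$ (unit sphere) such that $\|z+y\|\geq(1-\varepsilon)(|z^*(z)|+\|y\|)$ for all $z\in E$. *)

(* Defs.v *)
From HB Require Import structures.
From mathcomp Require Import all_boot all_order all_algebra.
From mathcomp Require Import all_classical all_reals all_analysis.
Set Implicit Arguments. Unset Strict Implicit. Unset Printing Implicit Defensive.
Import Order.TTheory GRing.Theory Num.Theory.
Import numFieldNormedType.Exports.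
Local Open Scope classical_set_scope.
Local Open Scope ring_scope.

Section Defs.
Variables (R : realType) (X : normedModType R).

Definition unit_ball : set X := [set x | `|x| <= 1].

Definition is_dual (f : X -> R) : Prop :=
  (forall (a : R) (x y : X), f (a *: x + y) = a * f x + f y) /\ continuous f.

Definition dual_norm (f : X -> R) : R :=
  sup [set r | exists x, `|x| <= 1 /\ r = `|f x|].

(* elements of the closed unit ball of the bidual X^** : linear functionals
   on X^* of norm <= 1 (boundedness, hence continuity, is then automatic) *)
Definition in_bidual_ball (Phi : (X -> R) -> R) : Prop :=
  (forall (a : R) (f g : X -> R), is_dual f -> is_dual g ->
      Phi (fun x => a * f x + g x) = a * Phi f + Phi g) /\
  (forall f, is_dual f -> `|Phi f| <= dual_norm f).

Definition weakly_open (U : set X) : Prop :=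
  forall x, U x -> exists (n : nat) (fs : 'I_n -> X -> R) (e : R),
    [/\ (forall i, is_dual (fs i)), 0 < e &
        forall y, (forall i, `|fs i y - fs i x| < e) -> U y].

Definition diam (W : set X) : R :=
  sup [set r | exists a b, [/\ W a, W b & r = `|a - b|]].

Definition diameter_two_property : Prop :=
  forall U : set X, weakly_open U -> U `&` unit_ball !=set0 ->
    diam (U `&` unit_ball) = 2.

(* X^* is weakly octahedral.  A finite-dimensional subspace E of X^* is the
   linear span of finitely many functionals fs 0, ..., fs (n-1). *)
Definition dual_weakly_octahedral : Prop :=
  forall (n : nat) (fs : 'I_n -> X -> R), (forall i, is_dual (fs i)) ->
  forall Phi : (X -> R) -> R, in_bidual_ball Phi ->
  forall eps : R, 0 < eps ->
  exists y : X -> R, [/\ is_dual y, dual_norm y = 1 &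
    forall c : 'I_n -> R,
      let z := fun x => \sum_(i < n) c i * fs i x in
      dual_norm (fun x => z x + y x) >= (1 - eps) * (`|Phi z| + dual_norm y)].

End Defs.

(* Main.v *)
Require Import Defs.
From HB Require Import structures.
From mathcomp Require Import all_boot all_order all_algebra.
From mathcomp Require Import all_classical all_reals all_analysis.
From mathcomp Require Import ring lra.
Import Order.TTheory GRing.Theory Num.Theory.
Import numFieldNormedType.Exports.
Local Open Scope classical_set_scope.
Local Open Scope ring_scope.
Set Implicit Arguments. Unset Strict Implicit.

Section A.
Variables (R : realType) (X : normedModType R).

Definition lin (f : X -> R) := forall (a : R) (x y : X), f (a *: x + y) = a * f x + f y.
Definition bnd (f : X -> R) := exists B : R, forall x, `|f x| <= B * `|x|.

Lemma lin0 f : lin f -> f 0 = 0.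
Proof. move=> hf; have := hf 1 0 0; rewrite scaler0 addr0 mul1r => h; lra. Qed.

Lemma linD f : lin f -> forall x y, f (x + y) = f x + f y.
Proof. by move=> hf x y; rewrite -[x in LHS]scale1r hf mul1r. Qed.

Lemma linZ f : lin f -> forall a x, f (a *: x) = a * f x.
Proof. by move=> hf a x; rewrite -[_ *: _]addr0 hf (lin0 hf) addr0. Qed.

Lemma linN f : lin f -> forall x, f (- x) = - f x.
Proof. by move=> hf x; rewrite -scaleN1r linZ // mulN1r. Qed.

Lemma linB f : lin f -> forall x y, f (x - y) = f x - f y.
Proof. by move=> hf x y; rewrite linD // linN. Qed.

Lemma bnd_pos f : bnd f -> exists B, 0 < B /\ forall x, `|f x| <= B * `|x|.
Proof.
case=> B hB; exists (`|B| + 1); split; first by rewrite ltr_pwDr // normr_ge0.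
move=> x; apply: (le_trans (hB x)); apply: ler_wpM2r; first exact: normr_ge0.
have := ler_norm B; lra.
Qed.

Lemma dn_ub f : bnd f -> forall x : X, `|x| <= 1 -> `|f x| <= dual_norm f.
Proof.
move=> /bnd_pos [B [B0 hB]] x hx.
apply: ub_le_sup; last by exists x.
exists B => r [y [hy ->]]; apply: (le_trans (hB y)).
by rewrite -[leRHS]mulr1 ler_wpM2l // ltW.
Qed.

Lemma dn_le f (c : R) : (forall x : X, `|x| <= 1 -> `|f x| <= c) -> dual_norm f <= c.
Proof.
move=> hc; apply: ge_sup; first by exists `|f 0|, 0; rewrite normr0 ler01.
by move=> r [y [hy ->]]; exact: hc.
Qed.

Lemma dn_ge0 f : bnd f -> 0 <= dual_norm f.
Proof.
move=> hf; apply: (le_trans _ (dn_ub hf (x := 0) _)); first exact: normr_ge0.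
by rewrite normr0 ler01.
Qed.

Lemma dn_mul f : lin f -> bnd f -> forall x, `|f x| <= dual_norm f * `|x|.
Proof.
move=> hl hb x; have [->|x0] := eqVneq x 0.
  by rewrite lin0 // !normr0 mulr0.
have nx : 0 < `|x| by rewrite normr_gt0.
have := dn_ub hb (x := `|x|^-1 *: x).
rewrite normrZ normfV normr_id mulVf ?gt_eqF // lexx => /(_ isT).
rewrite linZ // normrM normfV normr_id ler_pdivrMl //.
by rewrite mulrC.
Qed.

Lemma bnd_dn f : lin f -> bnd f -> forall x, `|f x| <= dual_norm f * `|x|.
Proof. exact: dn_mul. Qed.

Lemma bnd_from (f : X -> R) (B : R) : (forall x, `|f x| <= B * `|x|) -> bnd f.
Proof. by move=> h; exists B. Qed.

Lemma lin_cont f : lin f -> bnd f -> continuous f.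
Proof.
move=> hl /bnd_pos [B [B0 hB]] x; apply/cvgrPdist_lt => e e0.
apply/nbhs_normP; exists (e / B); first by rewrite /= divr_gt0.
move=> t /= ht; rewrite -linB //; apply: (le_lt_trans (hB _)).
by rewrite -ltr_pdivlMl // mulrC.
Qed.

Lemma cont_bnd f : lin f -> continuous f -> bnd f.
Proof.
move=> hl hc; have := hc 0 => /cvgrPdist_lt /(_ 1 ltr01).
rewrite lin0 // => /nbhs_normP [e /= e0 he].
exists (2 / e) => x; have [->|x0] := eqVneq x 0.
  by rewrite lin0 // !normr0 mulr0.
have nx : 0 < `|x| by rewrite normr_gt0.
have hy : ball_ Num.Def.normr 0 e ((e / 2 / `|x|) *: x).
  rewrite /ball_ /= sub0r normrN normrZ ger0_norm ?divr_ge0 ?ltW //.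
  rewrite divfK ?gt_eqF // ltr_pdivrMr // ltr_pMr //.
  by rewrite ltr1n.
have := he _ hy; rewrite /= sub0r normrN linZ // normrM.
have ep : 0 <= e / 2 / `|x| by rewrite !divr_ge0 // ltW.
rewrite (ger0_norm ep) => h.
have h2 : `|f x| < 1 / (e / 2 / `|x|) by rewrite ltr_pdivlMr ?divr_gt0 // mulrC.
apply: (le_trans (ltW h2)); rewrite le_eqVlt; apply/orP; left; apply/eqP.
by field; rewrite !gt_eqF.
Qed.

Lemma dual_lin f : is_dual f -> lin f.
Proof. by case. Qed.

Lemma dual_bnd f : is_dual f -> bnd f.
Proof. by case=> hl hc; exact: cont_bnd. Qed.

Lemma dualI f : lin f -> bnd f -> is_dual f.
Proof. by move=> hl hb; split => //; exact: lin_cont. Qed.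

Lemma dual_sum (I : finType) (fs : I -> X -> R) (c : I -> R) :
  (forall i, is_dual (fs i)) -> is_dual (fun x => \sum_i c i * fs i x).
Proof.
move=> hd; apply: dualI.
  move=> a x y; rewrite mulr_sumr -big_split /=; apply: eq_bigr => i _.
  by rewrite (dual_lin (hd i)); ring.
exists (\sum_i `|c i| * dual_norm (fs i)) => x; rewrite mulr_suml.
apply: (le_trans (ler_norm_sum _ _ _)); apply: ler_sum => i _.
rewrite normrM -mulrA ler_wpM2l //; exact: dn_mul (dual_lin (hd i)) (dual_bnd (hd i)) x.
Qed.

Lemma dn_scale f (k : R) : bnd f -> dual_norm (fun x => k * f x) = `|k| * dual_norm f.
Proof.
move=> hb; apply/eqP; rewrite eq_le; apply/andP; split.
  apply: dn_le => x hx; rewrite normrM ler_wpM2l //; exact: dn_ub.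
have [->|k0] := eqVneq k 0.
  rewrite normr0 mul0r; apply: dn_ge0; exists 0 => x; rewrite mul0r mul0r normr0 //.
have hb' : bnd (fun x => k * f x).
  case: hb => B hB; exists (`|k| * B) => x; rewrite normrM -mulrA ler_wpM2l //.
rewrite -ler_pdivlMl ?normr_gt0 //; apply: dn_le => x hx.
rewrite -[f x](mulKf k0) normrM normfV ler_wpM2l ?invr_ge0 //; exact: dn_ub.
Qed.

End A.
Section HBsec.
Variables (R : realType) (V : lmodType R) (p : V -> R).
Hypothesis psub : forall x y, p (x + y) <= p x + p y.
Hypothesis phom : forall t x, 0 < t -> p (t *: x) <= t * p x.

Let p0 : p 0 = 0.
Proof.
have h1 := psub 0 0; rewrite addr0 in h1.
have h2 := @phom 2^-1 0; rewrite scaler0 in h2.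
have : 0 < (2:R)^-1 by rewrite invr_gt0.
move=> /h2 h3; lra.
Qed.

Let phomE t x : 0 < t -> p (t *: x) = t * p x.
Proof.
move=> t0; apply/eqP; rewrite eq_le phom //=.
have := @phom t^-1 (t *: x); rewrite invr_gt0 scalerA mulVf ?gt_eqF // scale1r.
move=> /(_ t0) h; have e : t * t^-1 = 1 by rewrite mulfV ?gt_eqF.
have : t * p x <= t * (t^-1 * p (t *: x)) by rewrite ler_pM2l.
by rewrite mulrA e mul1r.
Qed.

Let pN x : 0 <= p x + p (- x).
Proof. by have := psub x (- x); rewrite subrr p0. Qed.

Definition good (G : set (V * R)) :=
  [/\ G (0, 0), (forall v r s, G (v, r) -> G (v, s) -> r = s),
      (forall a v r w s, G (v, r) -> G (w, s) -> G (a *: v + w, a * r + s)) &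
      (forall v r, G (v, r) -> r <= p v)].

Lemma good_cl2 G a b v r w s : good G -> G (v, r) -> G (w, s) ->
  G (a *: v + b *: w, a * r + b * s).
Proof.
case=> G00 _ Gc _ Gv Gw; have := Gc b w s 0 0 Gw G00.
rewrite !addr0 => Gw'; exact: Gc.
Qed.

Lemma hahn_banach (v0 : V) :
  exists l : V -> R, [/\ forall a x y, l (a *: x + y) = a * l x + l y,
    forall x, l x <= p x & l v0 = p v0].
Proof.
pose G0 : set (V * R) := [set vr | exists t, vr = (t *: v0, t * p v0)].
have G0good : good G0.
  split.
  - by exists 0; rewrite scale0r mul0r.
  - move=> v r s [t [-> ->]] [t' [e ->]].
    have : (t - t') *: v0 = 0 by rewrite scalerBl e subrr.
    move/eqP; rewrite scaler_eq0 => /orP [|/eqP ->]; last by rewrite p0 !mulr0.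
    by rewrite subr_eq0 => /eqP ->.
  - move=> a v r w s [t [-> ->]] [t' [-> ->]]; exists (a * t + t').
    by rewrite scalerA scalerDl mulrDl mulrA.
  - move=> v r [t [-> ->]].
    have [t0|t0|->] := ltgtP t 0; last by rewrite scale0r mul0r p0.
      have -> : t *: v0 = (- t) *: (- v0) by rewrite scaleNr scalerN opprK.
      rewrite phomE ?oppr_gt0 //; have := pN v0; nra.
    by rewrite phomE.
pose P (G : set (V * R)) := G = set0 \/ (good G /\ G0 `<=` G).
have hne G : P G -> G !=set0 -> good G /\ G0 `<=` G.
  by case=> // -> [z].
have [A [PA Amax]] : exists A, P A /\ forall B, A `<` B -> ~ P B.
  apply: Zorn_bigcup => F FP Ftot.
  set U := \bigcup_(X in F) X.
  have [[z Uz]|hz] := pselect (U !=set0); last first.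
    left; apply/seteqP; split => // y Uy; exfalso; apply: hz; by exists y.
  right.
  have gX X y : F X -> X y -> good X by move=> FX Xy; case: (hne X (FP X FX)) => //; exists y.
  case: Uz => X0 FX0 X0z.
  have [g0 s0] := hne X0 (FP X0 FX0) (ex_intro _ z X0z).
  have sup2 y1 y2 : U y1 -> U y2 -> exists2 X, F X & X y1 /\ X y2.
    move=> [X1 FX1 X1y] [X2 FX2 X2y]; case: (Ftot X1 X2 FX1 FX2) => h.
      by exists X2 => //; split => //; exact: h.
    by exists X1 => //; split => //; exact: h.
  split; last by move=> y G0y; exists X0 => //; exact: s0.
  split.
  - by exists X0 => //; case: g0.
  - move=> v r s Ur Us; have [X FX [Xr Xs]] := sup2 _ _ Ur Us.
    by case: (gX X _ FX Xr) => _ hf _ _; exact: hf Xr Xs.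
  - move=> a v r w s Ur Us; have [X FX [Xr Xs]] := sup2 _ _ Ur Us.
    by exists X => //; case: (gX X _ FX Xr) => _ _ hc _; exact: hc Xr Xs.
  - by move=> v r [X FX Xr]; case: (gX X _ FX Xr) => _ _ _ hd; exact: hd Xr.
have Ane : A !=set0.
  move: (PA); rewrite /P => -[A0|[g _]]; last by case: g => h0 _ _ _; exists (0, 0).
  exfalso; apply: (Amax G0); last by rewrite /P; right; split.
  rewrite A0; split => // h.
  have : (set0 : set (V * R)) (0, 0) by apply: h; case: G0good.
  by [].
have [Agood G0A] := hne A PA Ane.
case: (Agood) => A00 Afun Acl Adom.
have tot : forall w, exists r, A (w, r).
  move=> w; apply/not_existsP => nw.
  pose S := [set q | exists v r, A (v, r) /\ q = r - p (v - w)].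
  have Sbd v2 r2 : A (v2, r2) -> ubound S (p (v2 + w) - r2).
    move=> A2 q [v1 [r1 [A1 ->]]].
    have := Adom _ _ (Acl 1 v1 r1 v2 r2 A1 A2); rewrite scale1r mul1r => h.
    have := psub (v1 - w) (v2 + w).
    have -> : v1 - w + (v2 + w) = v1 + v2 by rewrite addrA addrAC subrK.
    lra.
  have S0 : S !=set0 by exists (0 - p (0 - w)), 0, 0.
  have hS : has_ubound S by exists (p (0 + w) - 0); exact: Sbd.
  pose c := sup S.
  have cge v r : A (v, r) -> r - p (v - w) <= c.
    by move=> Avr; apply: ub_le_sup => //; exists v, r.
  have cle v r : A (v, r) -> c <= p (v + w) - r.
    by move=> Avr; apply: ge_sup => //; exact: Sbd.
  pose A' := [set vr | exists v r t, A (v, r) /\ vr = (v + t *: w, r + t * c)].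
  have AA' : A `<=` A' by move=> [v r] Avr; exists v, r, 0; rewrite scale0r mul0r !addr0.
  apply: (Amax A').
    split => // h; apply: (nw c); apply: h.
    by exists 0, 0, 1; rewrite scale1r mul1r !add0r.
  right; split; last exact: subset_trans G0A AA'.
  split.
  - exact: AA'.
  - move=> v r s [v1 [r1 [t1 [A1 [-> ->]]]]] [v2 [r2 [t2 [A2 [e ->]]]]].
    have [et|tne] := eqVneq t1 t2.
      rewrite et in e *.
      have ev : v1 = v2 by apply: (addIr (t2 *: w)).
      by rewrite ev in A1; rewrite (Afun _ _ _ A1 A2).
    exfalso; apply: (nw ((t1 - t2)^-1 * r2 + (- (t1 - t2)^-1) * r1)).
    have -> : w = (t1 - t2)^-1 *: v2 + (- (t1 - t2)^-1) *: v1.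
      have e2 : (t1 - t2) *: w = v2 - v1.
        rewrite scalerBl; apply: (@addrI _ v1).
        by rewrite addrA e addrK [RHS]addrC subrK.
      rewrite scaleNr -scalerBr -e2 scalerA mulVf ?scale1r //.
      by rewrite subr_eq0.
    exact: good_cl2.
  - move=> a v r w' s [v1 [r1 [t1 [A1 [-> ->]]]]] [v2 [r2 [t2 [A2 [-> ->]]]]].
    exists (a *: v1 + v2), (a * r1 + r2), (a * t1 + t2); split; first exact: Acl.
    congr pair.
      by rewrite scalerDr scalerA scalerDl addrACA.
    ring.
  - move=> v r [v1 [r1 [t [A1 [-> ->]]]]].
    have [t0|t0|->] := ltgtP t 0; last by rewrite scale0r mul0r !addr0; exact: Adom.
      pose s := - t; have s0 : 0 < s by rewrite oppr_gt0.
      have A1' := good_cl2 s^-1 0 Agood A1 A00.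
      rewrite scale0r mulr0 !addr0 in A1'.
      have := cge _ _ A1'.
      have -> : v1 + t *: w = s *: (s^-1 *: v1 - w).
        by rewrite scalerBr scalerA mulfV ?gt_eqF // scale1r /s scaleNr opprK.
      rewrite phomE // => h.
      have : s * (s^-1 * r1 - p (s^-1 *: v1 - w)) <= s * c by rewrite ler_pM2l.
      rewrite mulrBr mulrA mulfV ?gt_eqF // mul1r /s; lra.
    have A1' := good_cl2 t^-1 0 Agood A1 A00.
    rewrite scale0r mulr0 !addr0 in A1'.
    have := cle _ _ A1'.
    have -> : v1 + t *: w = t *: (t^-1 *: v1 + w).
      by rewrite scalerDr scalerA mulfV ?gt_eqF // scale1r.
    rewrite phomE // => h.
    have : t * c <= t * (p (t^-1 *: v1 + w) - t^-1 * r1) by rewrite ler_pM2l.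
    rewrite mulrBr mulrA mulfV ?gt_eqF // mul1r; lra.
pose l w := proj1_sig (cid (tot w)).
have Al w : A (w, l w) by rewrite /l; case: cid.
exists l; split.
- by move=> a x y; apply: (Afun (a *: x + y)) => //; exact: Acl.
- by move=> x; exact: Adom.
- apply: (Afun v0) => //; apply: G0A; exists 1; by rewrite scale1r mul1r.
Qed.

End HBsec.

Section C.
Variables (R : realType) (X : normedModType R).

Lemma norming (x0 : X) : exists y : X -> R,
  [/\ is_dual y, forall x, `|y x| <= `|x| & y x0 = `|x0|].
Proof.
have psub : forall x y : X, `|x + y| <= `|x| + `|y| by move=> x y; exact: ler_normD.
have phom : forall (t : R) (x : X), 0 < t -> `|t *: x| <= t * `|x|.
  by move=> t x t0; rewrite normrZ gtr0_norm.
have [l [hl hle hl0]] := hahn_banach psub phom x0.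
have hab : forall x, `|l x| <= `|x|.
  move=> x; rewrite ler_norml hle andbT.
  have := hle (- x); rewrite normrN (linN hl) ; lra.
exists l; split => //; apply: dualI => //; exists 1 => x; rewrite mul1r; exact: hab.
Qed.

End C.

Section D.
Variables (R : realType) (X : normedModType R).

Lemma sum_ge_term (I : finType) (F : I -> R) (i : I) :
  (forall j, 0 <= F j) -> F i <= \sum_j F j.
Proof.
move=> h; rewrite (bigD1 i) //= lerDl; apply: sumr_ge0 => j _; exact: h.
Qed.

Lemma helly (I : finType) (gs : I -> X -> R) (b : I -> R) (M : R) :
  0 < M -> (forall i, is_dual (gs i)) ->
  (forall a : I -> R, \sum_i a i * b i <= M * dual_norm (fun x => \sum_i a i * gs i x)) ->
  forall d, 0 < d -> exists x : X, `|x| <= M /\ forall i, `|gs i x - b i| <= d.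
Proof.
move=> M0 hd hyp d d0.
pose B := 1 + \sum_i `|b i|.
have B1 : 1 <= B by rewrite lerDl; apply: sumr_ge0 => i _; exact: normr_ge0.
have B0 : 0 < B by apply: lt_le_trans B1.
pose d' := d * M / (2 * B).
have d'0 : 0 < d' by rewrite /d' !divr_gt0 ?mulr_gt0.
pose K := 2 * (M + d') / d.
have K0 : 0 < K by rewrite /K divr_gt0 ?mulr_gt0 ?addr_gt0.
pose E (v : I -> R) := [set r | exists x : X, r = `|x| + K * \sum_i `|v i - gs i x|].
pose q v := inf (E v).
have En v : E v !=set0 by exists (`|0 : X| + K * \sum_i `|v i - gs i 0|), 0.
have Elb v : has_lbound (E v).
  exists 0 => r [x ->]; apply: addr_ge0 => //; apply: mulr_ge0; first exact: ltW.
  by apply: sumr_ge0 => i _.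
have qle v x : q v <= `|x| + K * \sum_i `|v i - gs i x|.
  by apply: ge_inf => //; exists x.
have qge v c : (forall x, c <= `|x| + K * \sum_i `|v i - gs i x|) -> c <= q v.
  by move=> h; apply: lb_le_inf => // r [x ->].
have lg i := dual_lin (hd i).
have psub : forall v w, q (v + w) <= q v + q w.
  move=> v w.
  have h1 x x' : q (v + w) <= (`|x| + K * \sum_i `|v i - gs i x|) +
                              (`|x'| + K * \sum_i `|w i - gs i x'|).
    apply: (le_trans (qle _ (x + x'))).
    have e1 := ler_normD x x'.
    have e2 : \sum_i `|(v + w) i - gs i (x + x')| <=
              \sum_i `|v i - gs i x| + \sum_i `|w i - gs i x'|.
      rewrite -big_split /=; apply: ler_sum => i _.
      rewrite (linD (lg i)).
      have -> : v i + w i - (gs i x + gs i x') = (v i - gs i x) + (w i - gs i x') by ring.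
      exact: ler_normD.
    have e3 := ler_wpM2l (ltW K0) e2; lra.
  have h2 x' : q (v + w) - (`|x'| + K * \sum_i `|w i - gs i x'|) <= q v.
    apply: qge => x; have := h1 x x'; lra.
  have : q (v + w) - q v <= q w by apply: qge => x'; have := h2 x'; lra.
  lra.
have phom : forall t v, 0 < t -> q (t *: v) <= t * q v.
  move=> t v t0.
  have : q (t *: v) / t <= q v.
    apply: qge => x; rewrite ler_pdivrMr // mulrC.
    apply: (le_trans (qle _ (t *: x))); rewrite normrZ gtr0_norm // mulrDr.
    rewrite lerD2l mulrCA; apply: ler_wpM2l; first exact: ltW.
    rewrite mulr_sumr; apply: ler_sum => i _.
    rewrite (linZ (lg i)) /= -mulrBr normrM gtr0_norm //.
  by rewrite ler_pdivrMr // mulrC.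
have [l [hl hlq hlb]] := hahn_banach psub phom b.
have l0 : l 0 = 0.
  by have := hl 1 0 0; rewrite scaler0 addr0 mul1r => h; lra.
have lD x y : l (x + y) = l x + l y by rewrite -[x in LHS]scale1r hl mul1r.
have lZ c x : l (c *: x) = c * l x by rewrite -[_ *: _]addr0 hl l0 addr0.
pose a i := l (fun j => (i == j)%:R).
have lrep v : l v = \sum_i v i * a i.
  have ev : v = \sum_i v i *: (fun j => (i == j)%:R : R).
    apply/funext => j; rewrite fct_sumE.
    rewrite (bigD1 j) //= scalrfctE /= eqxx big1 ?addr0.
      by change (v j = v j * 1); rewrite mulr1.
    move=> i /negbTE hij; rewrite scalrfctE /= hij.
    by change (v i * 0 = 0); rewrite mulr0.
  rewrite {1}ev (big_morph l lD l0); apply: eq_bigr => i _; by rewrite lZ.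
pose g x := \sum_i a i * gs i x.
have gl x : g x = l (fun i => gs i x).
  by rewrite lrep; apply: eq_bigr => i _; rewrite mulrC.
have gle x : g x <= `|x|.
  rewrite gl; apply: (le_trans (hlq _)); apply: (le_trans (qle _ x)).
  by rewrite big1 ?mulr0 ?addr0 // => i _; rewrite subrr normr0.
have gN x : g (- x) = - g x.
  by rewrite /g -sumrN; apply: eq_bigr => i _; rewrite (linN (lg i)) mulrN.
have gabs x : `|g x| <= `|x|.
  rewrite ler_norml gle andbT; have := gle (- x); rewrite gN normrN; lra.
have dng : dual_norm g <= 1 by apply: dn_le => x hx; exact: le_trans (gabs x) hx.
have qb : q b <= M.
  rewrite -hlb lrep.
  have -> : \sum_i b i * a i = \sum_i a i * b i by apply: eq_bigr => i _; rewrite mulrC.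
  apply: (le_trans (hyp a)); rewrite -[leRHS]mulr1; apply: ler_wpM2l => //; exact: ltW.
have qb' : q b < M + d' by apply: (le_lt_trans qb); rewrite ltrDl.
have [r [x ->] hr] := inf_lt (En b) qb'.
set S := \sum_i `|b i - gs i x| in hr.
have S0 : 0 <= S by apply: sumr_ge0 => i _.
have KS0 : 0 <= K * S by apply: mulr_ge0 => //; exact: ltW.
have hx : `|x| < M + d' by lra.
have hS : K * S < M + d' by have := normr_ge0 x; lra.
pose k := M / (M + d').
have Md0 : 0 < M + d' by rewrite addr_gt0.
have k0 : 0 < k by rewrite divr_gt0.
have kM : k * (M + d') = M by rewrite /k divfK // gt_eqF.
exists (k *: x); split.
  by rewrite normrZ gtr0_norm // -kM ler_wpM2l ?ltW.
move=> i.
have hi : `|b i - gs i x| <= S by apply: (sum_ge_term (F := fun i => `|b i - gs i x|)).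
have Kd : K * (d / 2) = M + d' by rewrite /K; field; rewrite gt_eqF.
have Sd : S <= d / 2.
  by apply: ltW; rewrite -(ltr_pM2l K0) Kd.
have bB : `|b i| <= B.
  apply: (le_trans (sum_ge_term (F := fun i => `|b i|) i _)) => //.
  by rewrite /B lerDr.
have e1 : (1 - k) * B = k * (d / 2).
  rewrite /k /d'; field.
  by rewrite (gt_eqF B0) /= gt_eqF // addr_gt0 ?mulr_gt0.
have k1 : 0 <= 1 - k.
  rewrite subr_ge0 /k ler_pdivrMr // mul1r lerDl; exact: ltW.
have habs : `|k * gs i x - b i| <= k * `|gs i x - b i| + (1 - k) * `|b i|.
  have -> : k * gs i x - b i = k * (gs i x - b i) + (- ((1 - k) * b i)) by ring.
  apply: (le_trans (ler_normD _ _)).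
  by rewrite normrN (normrM k) (normrM (1 - k)) (gtr0_norm k0) (ger0_norm k1).
rewrite (linZ (lg i)); apply: (le_trans habs).
have h1 : k * `|gs i x - b i| <= k * (d / 2).
  rewrite ler_pM2l // distrC; exact: le_trans hi Sd.
have h2 : (1 - k) * `|b i| <= k * (d / 2) by rewrite -e1; exact: ler_wpM2l.
have : k < 1 by rewrite /k ltr_pdivrMr // mul1r ltrDl.
nra.
Qed.

End D.

Section E.
Variables (R : realType) (X : normedModType R).

Definition ext n (d : 'I_n -> R) (c : R) (i : 'I_n.+1) : R :=
  if unlift ord_max i is Some j then d j else c.

Lemma widen_lift n (j : 'I_n) : widen_ord (leqnSn n) j = lift ord_max j.
Proof. by apply: val_inj => /=; rewrite /bump leqNgt ltn_ord. Qed.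

Lemma ext_w n (d : 'I_n -> R) c j : ext d c (widen_ord (leqnSn n) j) = d j.
Proof. by rewrite /ext widen_lift liftK. Qed.

Lemma ext_max n (d : 'I_n -> R) c : ext d c ord_max = c.
Proof. by rewrite /ext unlift_none. Qed.

Lemma ext_sum n (d : 'I_n -> R) c (F : 'I_n.+1 -> R) :
  \sum_(i < n.+1) ext d c i * F i =
  \sum_(i < n) d i * F (widen_ord (leqnSn n) i) + c * F ord_max.
Proof.
rewrite big_ord_recr /= ext_max; congr (_ + _); apply: eq_bigr => i _.
by rewrite ext_w.
Qed.

Lemma ord_cases n (P : 'I_n.+1 -> Prop) :
  (forall j : 'I_n, P (widen_ord (leqnSn n) j)) -> P ord_max -> forall i, P i.
Proof.
move=> hw hm i; case: (unliftP ord_max i) => [j ->|->] //.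
by rewrite -widen_lift.
Qed.

Lemma kernel_lemma n (fs : 'I_n -> X -> R) (g : X -> R) :
  (forall i, lin (fs i)) -> lin g ->
  (forall x, (forall i, fs i x = 0) -> g x = 0) ->
  exists d : 'I_n -> R, forall x, g x = \sum_i d i * fs i x.
Proof.
elim: n fs g => [|n IH] fs g hfs hg hker.
  by exists (fun _ => 0) => x; rewrite big_ord0; apply: hker => -[m hm]; exfalso; move: hm; rewrite ltn0.
pose fs' := fun j : 'I_n => fs (widen_ord (leqnSn n) j).
pose h := fs ord_max.
have hfs' j : lin (fs' j) by exact: hfs.
have [hc|hc] := pselect (forall x, (forall j, fs' j x = 0) -> h x = 0).
  have [e he] := IH fs' h hfs' (hfs _) hc.
  have hg' : forall x, (forall j, fs' j x = 0) -> g x = 0.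
    move=> x hx; apply: hker; apply: ord_cases => //; exact: hc.
  have [d hd] := IH fs' g hfs' hg hg'.
  exists (ext d 0) => x; rewrite ext_sum mul0r addr0; exact: hd.
have [x0 hx0] : exists x0, (forall j, fs' j x0 = 0) /\ h x0 <> 0.
  apply/not_existsP => hn; apply: hc => x hx; apply/eqP/negPn/negP => hne.
  by apply: (hn x); split => //; apply/eqP.
case: hx0 => hx0 hh0.
pose x1 := (h x0)^-1 *: x0.
have hx1 : forall j, fs' j x1 = 0 by move=> j; rewrite (linZ (hfs' j)) hx0 mulr0.
have hh1 : h x1 = 1 by rewrite /h (linZ (hfs _)) mulVf //; apply/eqP.
pose g' := fun x => g x - g x1 * h x.
have hg'l : lin g'.
  by move=> a x y; rewrite /g' /h hg (hfs ord_max); ring.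
have hg'k : forall x, (forall j, fs' j x = 0) -> g' x = 0.
  move=> x hx; pose y := x - h x *: x1.
  have hy : forall i, fs i y = 0.
    apply: ord_cases.
      by move=> j; rewrite /y (linB (hfs _)) (linZ (hfs _)); rewrite -/(fs' j) hx hx1 mulr0 subr0.
    by rewrite /y (linB (hfs _)) (linZ (hfs _)) -/h hh1 mulr1 subrr.
  have := hker y hy; rewrite /y (linB hg) (linZ hg) /g' => e.
  by rewrite mulrC; apply/eqP; rewrite subr_eq0; apply/eqP; lra.
have [d hd] := IH fs' g' hfs' hg'l hg'k.
exists (ext d (g x1)) => x; rewrite ext_sum -hd /g' -/h; ring.
Qed.

End E.

Section F.
Variables (R : realType) (X : normedModType R).

Lemma lin_sum (I : finType) (fs : I -> X -> R) (c : I -> R) :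
  (forall i, lin (fs i)) -> lin (fun x => \sum_i c i * fs i x).
Proof.
move=> hl a x y; rewrite mulr_sumr -big_split /=; apply: eq_bigr => i _.
by rewrite (hl i); ring.
Qed.

Lemma lin_bound (f : X -> R) (m : R) : lin f ->
  (forall x, `|x| <= 1 -> `|f x| <= m) -> forall x, `|f x| <= m * `|x|.
Proof.
move=> hl hm x; have [->|x0] := eqVneq x 0.
  by rewrite lin0 // !normr0 mulr0.
have nx : 0 < `|x| by rewrite normr_gt0.
have := hm (`|x|^-1 *: x).
rewrite normrZ normfV normr_id mulVf ?gt_eqF // lexx => /(_ isT).
rewrite linZ // normrM normfV normr_id ler_pdivrMl //.
by rewrite mulrC.
Qed.

Lemma ext_sum_abs n (d : 'I_n -> R) c :
  \sum_(i < n.+1) `|ext d c i| = \sum_(i < n) `|d i| + `|c|.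
Proof.
rewrite big_ord_recr /= ext_max; congr (_ + _); apply: eq_bigr => i _.
by rewrite ext_w.
Qed.

Lemma fd_lemma n (fs : 'I_n -> X -> R) : (forall i, is_dual (fs i)) ->
  exists C : R, 0 <= C /\ forall (c : 'I_n -> R) (m : R),
    (forall x, `|x| <= 1 -> `|\sum_i c i * fs i x| <= m) ->
    exists c' : 'I_n -> R, (forall x, \sum_i c' i * fs i x = \sum_i c i * fs i x)
      /\ \sum_i `|c' i| <= C * m.
Proof.
elim: n fs => [|n IH] fs hfs.
  exists 0; split => // c m _; exists c; split => //.
  by rewrite big_ord0 mul0r.
pose fs' := fun j : 'I_n => fs (widen_ord (leqnSn n) j).
pose h := fs ord_max.
have hfs' j : is_dual (fs' j) by exact: hfs.
have hl i := dual_lin (hfs i).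
have hl' j := dual_lin (hfs' j).
have [C0 [C00 hC0]] := IH fs' hfs'.
have [hc|hc] := pselect (forall x, (forall j, fs' j x = 0) -> h x = 0).
  have [e he] := kernel_lemma hl' (hl ord_max) hc.
  exists C0; split => // c m hm.
  pose cc j := c (widen_ord (leqnSn n) j) + c ord_max * e j.
  have ecc x : \sum_i c i * fs i x = \sum_j cc j * fs' j x.
    rewrite big_ord_recr /= he mulr_sumr -big_split /=.
    by apply: eq_bigr => j _; rewrite /cc /fs'; ring.
  have hm2 : forall x, `|x| <= 1 -> `|\sum_j cc j * fs' j x| <= m.
    by move=> x hx; rewrite -ecc; exact: hm.
  have [c'' [hc1 hc2]] := hC0 cc m hm2.
  exists (ext c'' 0); split.
    by move=> x; rewrite ext_sum mul0r addr0 ecc; exact: hc1.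
  by rewrite ext_sum_abs normr0 addr0.
have [x0 hx0] : exists x0, (forall j, fs' j x0 = 0) /\ h x0 <> 0.
  apply/not_existsP => hn; apply: hc => x hx; apply/eqP/negPn/negP => hne.
  by apply: (hn x); split => //; apply/eqP.
case: hx0 => hx0 hh0.
pose x1 := (h x0)^-1 *: x0.
have hx1 : forall j, fs' j x1 = 0 by move=> j; rewrite (linZ (hl' j)) hx0 mulr0.
have hh1 : h x1 = 1 by rewrite /h (linZ (hl _)) mulVf //; apply/eqP.
pose r := `|x1|.
pose Bh := dual_norm h.
have r0 : 0 <= r by exact: normr_ge0.
have Bh0 : 0 <= Bh by exact: (dn_ge0 (dual_bnd (hfs ord_max))).
exists (C0 * (1 + r * Bh) + r); split.
  by apply: addr_ge0 => //; apply: mulr_ge0 => //; apply: addr_ge0 => //; exact: mulr_ge0.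
move=> c m hm.
have m0 : 0 <= m by apply: le_trans (hm 0 _); rewrite ?normr_ge0 // normr0.
pose z := fun x => \sum_i c i * fs i x.
have lz : lin z by exact: lin_sum.
have zb := lin_bound lz hm.
have ez x : z x = \sum_j c (widen_ord (leqnSn n) j) * fs' j x + c ord_max * h x.
  by rewrite /z big_ord_recr.
have cm : `|c ord_max| <= m * r.
  have := zb x1; rewrite ez hh1 mulr1 big1 ?add0r //.
  by move=> j _; rewrite hx1 mulr0.
pose cc j := c (widen_ord (leqnSn n) j).
have hm' : forall x, `|x| <= 1 -> `|\sum_j cc j * fs' j x| <= m * (1 + r * Bh).
  move=> x hx.
  have -> : \sum_j cc j * fs' j x = z x - c ord_max * h x by rewrite ez addrK.
  apply: (le_trans (ler_normB _ _)); rewrite normrM.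
  have h1 := hm x hx.
  have h2 : `|h x| <= Bh by exact: (dn_ub (dual_bnd (hfs ord_max)) hx).
  have h3 : `|c ord_max| * `|h x| <= m * r * Bh.
    by apply: ler_pM => //; exact: normr_ge0.
  lra.
have [c'' [hc1 hc2]] := hC0 cc _ hm'.
exists (ext c'' (c ord_max)); split.
  by move=> x; rewrite ext_sum hc1 -/(z x) ez.
rewrite ext_sum_abs.
have : C0 * (m * (1 + r * Bh)) = C0 * (1 + r * Bh) * m by ring.
lra.
Qed.

End F.

Section G.
Variables (R : realType) (X : normedModType R).

Definition extT n (T : Type) (d : 'I_n -> T) (c : T) (i : 'I_n.+1) : T :=
  if unlift ord_max i is Some j then d j else c.

Lemma extT_w n T (d : 'I_n -> T) c j : extT d c (widen_ord (leqnSn n) j) = d j.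
Proof. by rewrite /extT widen_lift liftK. Qed.

Lemma extT_max n T (d : 'I_n -> T) c : extT d c ord_max = c.
Proof. by rewrite /extT unlift_none. Qed.

Lemma dn_ext (f g : X -> R) : (forall x, f x = g x) -> dual_norm f = dual_norm g.
Proof. by move=> h; congr dual_norm; apply/funext. Qed.

Lemma key_ineq n (fs : 'I_n -> X -> R) (y : X -> R) (x0 : X) (eps : R) :
  (forall i, is_dual (fs i)) -> is_dual y -> `|x0| <= 1 -> 0 < eps -> eps < 1 ->
  (forall c : 'I_n -> R,
     dual_norm (fun x => \sum_i c i * fs i x + y x) >=
     (1 - eps) * (`|\sum_i c i * fs i x0| + 1)) ->
  forall (a : 'I_n -> R) (t : R),
    (1 - eps) * (`|\sum_i a i * fs i x0| + `|t|) <=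
    dual_norm (fun x => \sum_i a i * fs i x + t * y x).
Proof.
move=> hfs hy hx0 e0 e1 hwo a t.
have hg : is_dual (fun x => \sum_i a i * fs i x) by exact: dual_sum.
have hh : is_dual (fun x => \sum_i a i * fs i x + t * y x).
  apply: dualI.
    move=> b u v; rewrite (dual_lin hg) (dual_lin hy); ring.
  have [B1 hB1] := dual_bnd hg; have [B2 hB2] := dual_bnd hy.
  exists (B1 + `|t| * B2) => u; apply: (le_trans (ler_normD _ _)).
  rewrite mulrDl normrM -mulrA; apply: lerD => //; apply: ler_wpM2l => //.
have [->|t0] := eqVneq t 0.
  rewrite normr0 addr0.
  rewrite (@dn_ext _ (fun x => \sum_i a i * fs i x)); last by move=> x; rewrite mul0r addr0.
  apply: le_trans (dn_ub (dual_bnd hg) hx0).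
  rewrite ler_piMl ?normr_ge0 //; lra.
have := hwo (fun i => a i / t).
rewrite (@dn_ext _ (fun x => t^-1 * (\sum_i a i * fs i x + t * y x))); last first.
  move=> x; rewrite mulrDr mulr_sumr mulKf //; congr (_ + _).
  by apply: eq_bigr => i _; ring.
rewrite dn_scale; last exact: dual_bnd.
have -> : \sum_i a i / t * fs i x0 = t^-1 * \sum_i a i * fs i x0.
  by rewrite mulr_sumr; apply: eq_bigr => i _; ring.
rewrite normrM normfV => h.
have tp : 0 < `|t| by rewrite normr_gt0.
have := ler_wpM2l (ltW tp) h.
have aux : forall P Q D : R, P * P^-1 = 1 ->
    P * ((1 - eps) * (P^-1 * Q + 1)) <= P * (P^-1 * D) -> (1 - eps) * (Q + P) <= D.
  move=> P Q D tv h2.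
  have q1 : P * ((1 - eps) * (P^-1 * Q + 1)) = (1 - eps) * (Q + P).
    by rewrite mulrCA mulrDr mulrA tv mul1r mulr1.
  have q2 : P * (P^-1 * D) = D by rewrite mulrA tv mul1r.
  by rewrite -q1 -[leRHS]q2.
apply: aux; by rewrite mulfV ?gt_eqF.
Qed.

End G.

Section H.
Variables (R : realType) (X : normedModType R).

Lemma sum_extR n (a : 'I_n.+1 -> R) (F : 'I_n -> R) c :
  \sum_i a i * extT F c i = \sum_j a (widen_ord (leqnSn n) j) * F j + a ord_max * c.
Proof.
rewrite big_ord_recr /= extT_max; congr (_ + _); apply: eq_bigr => j _.
by rewrite extT_w.
Qed.

Lemma sum_extF n (a : 'I_n.+1 -> R) (F : 'I_n -> X -> R) (c : X -> R) x :
  \sum_i a i * extT F c i x = \sum_j a (widen_ord (leqnSn n) j) * F j x + a ord_max * c x.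
Proof.
rewrite big_ord_recr /= extT_max; congr (_ + _); apply: eq_bigr => j _.
by rewrite extT_w.
Qed.

Lemma dirB : dual_weakly_octahedral X -> diameter_two_property X.
Proof.
move=> hwo U hU [w0 [Uw0 Bw0]].
rewrite /diam.
set W := U `&` (@unit_ball R X).
set D := [set r | exists a b, [/\ W a, W b & r = `|a - b|]].
have Dne : D !=set0 by exists `|w0 - w0|, w0, w0.
have Dub : ubound D 2.
  move=> r [a [b [[_ Ba] [_ Bb] ->]]]; apply: (le_trans (ler_normB _ _)).
  rewrite /unit_ball /= in Ba Bb; lra.
have Dhas : has_ubound D by exists 2.
suff Dlow : forall d, 0 < d -> exists2 r, D r & 2 - d <= r.
  apply/eqP; rewrite eq_le ge_sup //=; rewrite leNgt; apply/negP => hlt.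
  have hd0 : 0 < (2 - sup D) / 2 by rewrite divr_gt0 // subr_gt0.
  have [r Dr hr] := Dlow _ hd0.
  have := ub_le_sup Dhas Dr; lra.
move=> d d0.
have [n [fs [e [hfd e0 hnb]]]] := hU w0 Uw0.
pose Bw := \sum_i `|fs i w0|.
have Bwp : 0 <= Bw by apply: sumr_ge0 => i _.
pose t := Num.min (Num.min (1/2) (d/8)) (e / (2 * (1 + Bw))).
have B1p : 0 < 1 + Bw by lra.
have t0 : 0 < t.
  by rewrite /t !lt_min !divr_gt0 // mulr_gt0.
have t12 : t <= 1/2 by rewrite !ge_min lexx.
have td : t <= d/8 by rewrite !ge_min lexx orbT.
have te : t * (1 + Bw) <= e / 2.
  have : t <= e / (2 * (1 + Bw)) by rewrite ge_min lexx orbT.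
  move=> h; have := ler_wpM2r (ltW B1p) h.
  have -> : e / (2 * (1 + Bw)) * (1 + Bw) = e / 2 by field; rewrite gt_eqF.
  by [].
have hPhi : in_bidual_ball (fun f : X -> R => f w0).
  split; first by []. move=> f hf; exact: (dn_ub (dual_bnd hf) Bw0).
have [y [hy ny hy2]] := hwo n fs hfd _ hPhi t t0.
have hwo' : forall c : 'I_n -> R,
    (1 - t) * (`|\sum_i c i * fs i w0| + 1) <= dual_norm (fun x => \sum_i c i * fs i x + y x).
  by move=> c; have := hy2 c; rewrite /= ny.
have t1 : t < 1 by lra.
have key := key_ineq hfd hy Bw0 t0 t1 hwo'.
have yb : forall w, `|y w| <= `|w|.
  by move=> w; have := dn_mul (dual_lin hy) (dual_bnd hy) w; rewrite ny mul1r.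
have pt : forall s : R, `|s| = 1 -> exists u, [/\ `|u| <= 1,
    forall i, `|fs i u - fs i w0| < e & `|y u - s| <= 2 * t].
  move=> s s1.
  have Mp : 0 < (1 - t)^-1 by rewrite invr_gt0 subr_gt0.
  have hgs : forall i, is_dual (extT fs y i).
    by move=> i; rewrite /extT; case: (unlift ord_max i).
  have hyp : forall a : 'I_n.+1 -> R,
      \sum_i a i * extT (fun i => fs i w0) s i <=
      (1 - t)^-1 * dual_norm (fun x => \sum_i a i * extT fs y i x).
    move=> a; rewrite sum_extR (dn_ext (fun x => sum_extF a fs y x)).
    have := key (fun j => a (widen_ord (leqnSn n) j)) (a ord_max).
    set S := \sum_j _; set Dn := dual_norm _ => hk.
    rewrite [leRHS]mulrC ler_pdivlMr ?subr_gt0 //.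
    have h1 : S <= `|S| by exact: ler_norm.
    have h2 : a ord_max * s <= `|a ord_max| by rewrite -[leRHS]mulr1 -s1 -normrM ler_norm.
    have : 0 <= 1 - t by lra.
    nra.
  have [x [hx hxi]] := helly Mp hgs hyp t0.
  exists ((1 - t) *: x); split.
  - have h1t : 0 < 1 - t by lra.
    rewrite normrZ (ger0_norm (ltW h1t)).
    by apply: le_trans (ler_wpM2l (ltW h1t) hx) _; rewrite mulfV ?gt_eqF.
  - move=> i; have := hxi (widen_ord (leqnSn n) i); rewrite !extT_w => hi.
    rewrite (linZ (dual_lin (hfd i))).
    have -> : (1 - t) * fs i x - fs i w0 = (1 - t) * (fs i x - fs i w0) + (- (t * fs i w0)) by ring.
    apply: (le_lt_trans (ler_normD _ _)); rewrite normrN !normrM (ger0_norm (_ : 0 <= 1 - t)); last lra.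
    rewrite (gtr0_norm t0).
    have hb : `|fs i w0| <= Bw by exact: (sum_ge_term (F := fun i => `|fs i w0|)).
    have : (1 - t) * `|fs i x - fs i w0| <= t by apply: le_trans (ler_piMl _ _) hi; [exact: normr_ge0|lra].
    have : t * `|fs i w0| <= t * Bw by rewrite ler_pM2l.
    lra.
  - have := hxi ord_max; rewrite !extT_max => hi.
    rewrite (linZ (dual_lin hy)).
    have -> : (1 - t) * y x - s = (1 - t) * (y x - s) + (- (t * s)) by ring.
    apply: (le_trans (ler_normD _ _)); rewrite normrN !normrM s1 (ger0_norm (_ : 0 <= 1 - t)); last lra.
    rewrite (gtr0_norm t0).
    have : (1 - t) * `|y x - s| <= t by apply: le_trans (ler_piMl _ _) hi; [exact: normr_ge0|lra].
    lra.
have [u [hu1 hu2 hu3]] := pt 1 (normr1 _).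
have n1 : `|(-1 : R)| = 1 by rewrite normrN normr1.
have [v [hv1 hv2 hv3]] := pt (-1) n1.
exists `|u - v|.
  exists u, v; split => //; split => //; [exact: hnb|exact: hnb].
have := yb (u - v); rewrite (linB (dual_lin hy)).
have := ler_norml (y u - 1) (2 * t); rewrite hu3 => /esym /andP [hu _].
have := ler_norml (y v - -1) (2 * t); rewrite hv3 => /esym /andP [_ hv].
move=> h; have := ler_norm (y u - y v); lra.
Qed.

End H.

Section I.
Variables (R : realType) (X : normedModType R).

Lemma Phi_sum (Phi : (X -> R) -> R) : in_bidual_ball Phi ->
  forall n (fs : 'I_n -> X -> R) (c : 'I_n -> R), (forall i, is_dual (fs i)) ->
  Phi (fun x => \sum_i c i * fs i x) = \sum_i c i * Phi (fs i).
Proof.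
move=> [hPl hPb]; elim=> [|n IH] fs c hfs.
  have hz : is_dual (fun _ : X => (0 : R)).
    apply: dualI; first by move=> a x y; rewrite mulr0 addr0.
    by exists 0 => x; rewrite normr0 mul0r.
  have := hPl 1 _ _ hz hz.
  have -> : (fun x : X => 1 * (0 : R) + 0) = (fun _ => 0).
    by apply/funext => x; rewrite mulr0 addr0.
  move=> h0.
  have -> : (fun x => \sum_(i < 0) c i * fs i x) = (fun _ => 0).
    by apply/funext => x; rewrite big_ord0.
  rewrite big_ord0; lra.
have -> : (fun x => \sum_(i < n.+1) c i * fs i x) =
    (fun x => c ord_max * fs ord_max x +
      \sum_(i < n) c (widen_ord (leqnSn n) i) * fs (widen_ord (leqnSn n) i) x).
  by apply/funext => x; rewrite big_ord_recr addrC.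
rewrite hPl //; last exact: dual_sum.
rewrite IH // big_ord_recr addrC //.
Qed.

End I.
Lemma final_arith (R : realType) (ep dl C m L P zu zv yu yv : R) :
  0 < ep -> ep <= 1/2 -> 0 <= C -> 0 <= m -> 0 < dl -> dl * (ep + 4 * C) = ep ^+ 2 ->
  zu + yu <= L -> - (zv + yv) <= L -> `|zu - P| <= 2 * dl * C * m ->
  `|zv - P| <= 2 * dl * C * m ->
  1 - dl < yu -> yv < -1 + dl -> m <= L + 1 -> `|P| <= m ->
  (1 - ep) * (`|P| + 1) <= L.
Proof.
move=> ep0 ep2 C0 m0 dl0 dlE Lu Lv eu ev hyu hyv Lm Pm.
move: eu ev; rewrite !ler_norml => /andP [eu1 eu2] /andP [ev1 ev2].
have hP : `|P| + 1 - dl * (1 + 2 * C * m) <= L.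
  case: (lerP 0 P) => hp; [rewrite ger0_norm //|rewrite ltr0_norm //]; lra.
have P0 : 0 <= `|P| by exact: normr_ge0.
have [hm|hm] := lerP (ep * m) 2.
  have h1 : ep * (dl * (1 + 2 * C * m)) <= ep * ep.
    have : dl * (2 * C * (ep * m)) <= dl * (4 * C).
      apply: ler_wpM2l; first exact: ltW.
      have -> : 4 * C = 2 * C * 2 by ring.
      apply: ler_wpM2l => //; apply: mulr_ge0 => //.
    rewrite expr2 in dlE; move=> h; rewrite -dlE; nra.
  have h2 : dl * (1 + 2 * C * m) <= ep by rewrite -(ler_pM2l ep0).
  nra.
nra.
Qed.

Section J.
Variables (R : realType) (X : normedModType R).

Lemma dirA : diameter_two_property X -> dual_weakly_octahedral X.
Proof.
move=> hd2 n fs hfs Phi hPhi eps eps0.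
have [hPl hPb] := hPhi.
pose ep := Num.min eps (1/2).
have ep0 : 0 < ep by rewrite lt_min eps0 divr_gt0.
have epe : ep <= eps by rewrite ge_min lexx.
have ep2 : ep <= 1/2 by rewrite ge_min lexx orbT.
have [C [C0 hC]] := fd_lemma hfs.
pose dl := ep ^+ 2 / (ep + 4 * C).
have C4 : 0 <= 4 * C by apply: mulr_ge0.
have epC : 0 < ep + 4 * C by lra.
have dl0 : 0 < dl by rewrite divr_gt0 // exprn_gt0.
have dlE : dl * (ep + 4 * C) = ep ^+ 2 by rewrite divfK // gt_eqF.
have dle : dl <= ep.
  have : ep * ep <= ep * (ep + 4 * C) by rewrite ler_pM2l // lerDl mulr_ge0.
  rewrite -expr2 -dlE => h; rewrite -(ler_pM2r epC); lra.
have hyp1 : forall a : 'I_n -> R,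
    \sum_i a i * Phi (fs i) <= 1 * dual_norm (fun x => \sum_i a i * fs i x).
  move=> a; rewrite mul1r -Phi_sum //.
  apply: le_trans (ler_norm _) _; apply: hPb; exact: dual_sum.
have [x1 [hx1 hx1i]] := helly ltr01 hfs hyp1 dl0.
pose U := [set w : X | exists r, r < dl /\ forall i, `|fs i w - fs i x1| <= r].
have Uo : weakly_open U.
  move=> w [r [rd hr]]; exists n, fs, ((dl - r) / 2); split => //.
    by rewrite divr_gt0 // subr_gt0.
  move=> w' hw'; exists (r + (dl - r) / 2); split; first lra.
  move=> i; have := hw' i; have := hr i.
  have := ler_normD (fs i w' - fs i w) (fs i w - fs i x1).
  rewrite addrA subrK; lra.
have Une : U `&` @unit_ball R X !=set0.
  exists x1; split => //; exists 0; split => // i; rewrite subrr normr0 //.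
have := hd2 U Uo Une; rewrite /diam => hsup.
set D := [set r | _] in hsup.
have Dne : D !=set0 by case: Une => w Uw; exists `|w - w|, w, w.
have : 2 - dl < sup D by rewrite hsup; lra.
move=> /(sup_gt Dne) [r [u [v [[Uu Bu] [Uv Bv] ->]]] huv].
rewrite /unit_ball /= in Bu Bv.
have [y [hy hyb hyuv]] := norming (u - v).
have uv0 : 0 < `|u - v| by lra.
have ny : dual_norm y = 1.
  apply/eqP; rewrite eq_le; apply/andP; split.
    by apply: dn_le => x hx; apply: le_trans (hyb x) hx.
  have := dn_ub (dual_bnd hy) (x := `|u - v|^-1 *: (u - v)).
  rewrite normrZ normfV normr_id mulVf ?gt_eqF // lexx => /(_ isT).
  by rewrite (linZ (dual_lin hy)) hyuv normrM normfV normr_id mulVf ?gt_eqF.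
rewrite (linB (dual_lin hy)) in hyuv.
have := le_trans (hyb v) Bv; rewrite ler_norml => /andP [hv1 hv2].
have := le_trans (hyb u) Bu; rewrite ler_norml => /andP [hu1 hu2].
have yu : 1 - dl < y u by lra.
have yv : y v < -1 + dl by lra.
exists y; split => // c /=.
rewrite ny.
pose z := fun x => \sum_i c i * fs i x.
have hz : is_dual z by exact: dual_sum.
pose m := dual_norm z.
have m0 : 0 <= m by exact: dn_ge0 (dual_bnd hz).
have [c' [hc'1 hc'2]] := hC c m (dn_ub (dual_bnd hz)).
have Phiz : Phi z = \sum_i c' i * Phi (fs i).
  rewrite -Phi_sum //; congr Phi; apply/funext => x; by rewrite hc'1.
have errw : forall w, U w -> `|z w - Phi z| <= 2 * dl * C * m.
  move=> w [rw [rwd hrw]].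
  have -> : z w - Phi z = \sum_i c' i * (fs i w - Phi (fs i)).
    rewrite Phiz /z -hc'1 -sumrB; apply: eq_bigr => i _; ring.
  apply: (le_trans (ler_norm_sum _ _ _)).
  have : \sum_i `|c' i| * (2 * dl) <= 2 * dl * C * m.
    rewrite -mulr_suml; have : 0 <= 2 * dl by apply: mulr_ge0 => //; exact: ltW.
    move=> h2; have := ler_wpM2r h2 hc'2; lra.
  apply: le_trans; apply: ler_sum => i _; rewrite normrM; apply: ler_wpM2l => //.
  have := ler_normD (fs i w - fs i x1) (fs i x1 - Phi (fs i)).
  rewrite addrA subrK; have := hrw i; have := hx1i i; lra.
have hzy : bnd (fun x => z x + y x).
  have [B1 hB1] := dual_bnd hz; have [B2 hB2] := dual_bnd hy.
  exists (B1 + B2) => x; apply: (le_trans (ler_normD _ _)); rewrite mulrDl.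
  exact: lerD.
set L := dual_norm (fun x => z x + y x).
have Lu : z u + y u <= L.
  have := dn_ub hzy Bu; rewrite -/L /= => h; exact: le_trans (ler_norm _) h.
have Lv : - (z v + y v) <= L.
  have := dn_ub hzy Bv; rewrite -/L /= => h.
  have := ler_norm (- (z v + y v)); rewrite normrN; lra.
have Lm : m <= L + 1.
  apply: dn_le => x hx.
  have h1 := dn_ub hzy hx; rewrite -/L /= in h1.
  have e : z x = (z x + y x) - y x by rewrite addrK.
  rewrite e; apply: (le_trans (ler_normB _ _)); apply: lerD => //.
  exact: le_trans (hyb x) hx.
have Pm : `|Phi z| <= m by exact: hPb.
have eu := errw u Uu; have ev := errw v Uv.
have L0 : 0 <= L by apply: dn_ge0.
have hep : (1 - eps) * (`|Phi z| + 1) <= (1 - ep) * (`|Phi z| + 1).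
  by apply: ler_wpM2r; [apply: addr_ge0|lra].
apply: le_trans hep _.
exact: (final_arith ep0 ep2 C0 m0 dl0 dlE Lu Lv eu ev yu yv Lm Pm).
Qed.

End J.

Unset Implicit Arguments.

Theorem theorem3p4 (R : realType) (X : completeNormedModType R)
  (nontriv : exists x : X, x != 0) :
  diameter_two_property X <-> dual_weakly_octahedral X.
Proof.
split; [exact: (@dirA R X) | exact: (@dirB R X)].
Qed.
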